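(* Let $k\ge2$, $n\ge1$ be integers, let $\bar{\mathcal{P}}\in\mathbb{R}^{[k,n]}$ be a columnwise-substochastic tensor, $\alpha\in[0,1)$, and let $\mathbf{v}\in\mathbb{R}^n$ be a positive stochastic vector. Then every nonnegative solution $\mathbf{y}_*$ of the MLPPR system $(\mathbf{e}^T\mathbf{y})^{k-2}\mathbf{y}-\alpha\bar{\mathcal{P}}\mathbf{y}^{k-1}=\mathbf{v}$ (equivalently, every fixed point $\mathbf{y}_*=\Phi(\mathbf{y}_* )$ in $\Delta$ of the map $\Phi(\mathbf{y}):=(1+\alpha\mathbf{e}^T(\bar{\mathcal{P}}\mathbf{y}^{k-1}))^{-\frac{k-2}{k-1}}(\mathbf{v}+\alpha\bar{\mathcal{P}}\mathbf{y}^{k-1})$) is a positive vector.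
   Context: For $\mathcal{P}\in\mathbb{R}^{[k,n]}$ (real tensors of order $k$, dimension $n$) and $\mathbf{y}\in\mathbb{R}^n$, $(\mathcal{P}\mathbf{y}^{k-1})_i=\sum_{i_2,\dots,i_k}p_{i i_2\dots i_k}y_{i_2}\cdots y_{i_k}$. $\bar{\mathcal{P}}$ is columnwise-substochastic if its entries are nonnegative and $\sum_{i}\bar p_{i i_2\dots i_k}\le1$ for all $i_2,\dots,i_k$. $\mathbf{e}$ is the all-ones vector; a stochastic vector is nonnegative with entries summing to $1$. $\Delta:=\{\mathbf{y}\in\mathbb{R}^n_+:\mathbf{e}^T\mathbf{y}\le(1-\alpha)^{-\frac{1}{k-1}}\}$. *)

(* Defs.v *)
From HB Require Import structures.
From mathcomp Require Import all_boot all_order all_algebra.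
From mathcomp Require Import reals exp.
Set Implicit Arguments. Unset Strict Implicit. Unset Printing Implicit Defensive.
Import Order.TTheory GRing.Theory Num.Theory.
Local Open Scope ring_scope.

(* A real tensor of order k and dimension n is represented as
   P i (i_2,...,i_k), with the first index i : 'I_n and the remaining
   k-1 indices packed in a finite function 'I_(k.-1) -> 'I_n. *)
Definition tensor (R : realType) (k n : nat) :=
  'I_n -> {ffun 'I_(k.-1) -> 'I_n} -> R.

Definition tapply (R : realType) (k n : nat) (P : tensor R k n)
  (y : 'I_n -> R) : 'I_n -> R :=
  fun i => \sum_(t : {ffun 'I_(k.-1) -> 'I_n}) P i t * \prod_(j < k.-1) y (t j).

Definition col_substochastic (R : realType) (k n : nat) (P : tensor R k n) :=
  (forall i t, 0 <= P i t) /\ (forall t, \sum_(i < n) P i t <= 1).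

Definition esum (R : realType) (n : nat) (y : 'I_n -> R) := \sum_(i < n) y i.

Definition nonneg_vec (R : realType) (n : nat) (y : 'I_n -> R) :=
  forall i, 0 <= y i.
Definition pos_vec (R : realType) (n : nat) (y : 'I_n -> R) :=
  forall i, 0 < y i.
Definition stochastic (R : realType) (n : nat) (v : 'I_n -> R) :=
  nonneg_vec v /\ esum v = 1.

Definition Delta (R : realType) (k n : nat) (alpha : R) (y : 'I_n -> R) :=
  nonneg_vec y /\ esum y <= powR (1 - alpha) (- (1 / (k.-1)%:R)).

Definition Phi (R : realType) (k n : nat) (P : tensor R k n) (alpha : R)
  (v y : 'I_n -> R) : 'I_n -> R :=
  fun i => powR (1 + alpha * esum (tapply P y))
                (- ((k.-2)%:R / (k.-1)%:R)) * (v i + alpha * tapply P y i).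

(* Main.v *)
Require Import Defs.
From HB Require Import structures.
From mathcomp Require Import all_boot all_order all_algebra.
From mathcomp Require Import reals exp.
Import Order.TTheory GRing.Theory Num.Theory.
Local Open Scope ring_scope.

Lemma tapply_ge0 {R : realType} {k n : nat} {P : tensor R k n} {y : 'I_n -> R} :
  (forall i t, 0 <= P i t) -> nonneg_vec y -> forall i, 0 <= tapply P y i.
Proof.
move=> HP Hy i; rewrite /tapply; apply: sumr_ge0 => t _.
by apply: mulr_ge0 => //; apply: prodr_ge0 => j _; apply: Hy.
Qed.

Theorem corollary3p7 (R : realType) (k n : nat) (P : tensor R k n)
  (alpha : R) (v : 'I_n -> R) :
  (2 <= k)%N -> (1 <= n)%N ->
  col_substochastic P ->
  0 <= alpha -> alpha < 1 ->
  pos_vec v -> stochastic v ->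
  (forall y : 'I_n -> R, nonneg_vec y ->
     (forall i, (esum y) ^+ (k - 2) * y i - alpha * tapply P y i = v i) ->
     pos_vec y)
  /\
  (forall y : 'I_n -> R, Delta k alpha y -> Phi P alpha v y = y -> pos_vec y).
Proof.
move=> _ _ [HP _] Ha _ Hv _; split.
- move=> y Hy Heq i.
  have HT := tapply_ge0 HP Hy i.
  have H1 : 0 < (esum y) ^+ (k - 2) * y i.
    have := Heq i => /eqP; rewrite subr_eq => /eqP ->.
    by apply: ltr_wpDr; [apply: mulr_ge0 | apply: Hv].
  rewrite lt_neqAle Hy andbT; apply/eqP => H0.
  by move: H1; rewrite -H0 mulr0 ltxx.
- move=> y [Hy _] HF i.
  rewrite -HF /Phi; apply: mulr_gt0.
    apply: powR_gt0; apply: ltr_wpDr; last exact: ltr01.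
    apply: mulr_ge0 => //; rewrite /esum; apply: sumr_ge0 => j _.
    exact: tapply_ge0.
  by apply: ltr_wpDr; [apply: mulr_ge0 => //; apply: tapply_ge0 | apply: Hv].
Qed.
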